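(* Consider the binary random graph affiliation mixture model with $Q\ge 2$ groups and $\alpha\ne\beta$. Let $s_k=\sum_{q=1}^Q\pi_q^k$ and $m_1=\mathbb E(X_{12})$, $m_2=\mathbb E(X_{12}X_{13})$, $m_3=\mathbb E(X_{12}X_{13}X_{23})$. (i) If $m_2\ne m_1^2$, then $\boldsymbol\pi$ is non-uniform, the quantities $(m_1^2-m_2)$ and $(2s_2^3-3s_3s_2+s_3)$ are non-zero, and $$\beta=\frac{(s_3-s_2s_3)m_1^3+(s_2^3-s_3)m_2m_1+(s_3s_2-s_2^3)m_3}{(m_1^2-m_2)(2s_2^3-3s_3s_2+s_3)},\qquad \alpha=\frac{m_1+(s_2-1)\beta}{s_2}.$$ (ii) If $m_2=m_1^2$, then $\boldsymbol\pi$ is uniform (i.e. $\pi_q=1/Q$ for all $q$) and $$\beta=m_1+\Big(\frac{m_1^3-m_3}{Q-1}\Big)^{1/3},\qquad \alpha=Qm_1+(1-Q)\beta,$$ where $(\cdot)^{1/3}$ denotes the real cube root.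
   Context: Random graph mixture model: nodes have i.i.d. latent groups $Z_i\in\{1,\dots,Q\}$ with $\pi_q=\mathbb P(Z_i=q)\in(0,1)$, $\sum_q\pi_q=1$; edge variables $X_{ij}$ ($i<j$) are conditionally independent given all $Z$'s, with law of $X_{ij}$ depending only on $(Z_i,Z_j)$. Binary affiliation model: $X_{ij}\in\{0,1\}$ with $\mathbb P(X_{ij}=1\mid Z_i=q,Z_j=l)=\alpha$ if $q=l$ and $=\beta$ if $q\ne l$. In terms of parameters, $m_1=s_2\alpha+(1-s_2)\beta$, $m_2=s_3\alpha^2+2(s_2-s_3)\alpha\beta+(1-2s_2+s_3)\beta^2$, $m_3=s_3\alpha^3+3(s_2-s_3)\alpha\beta^2+(1-3s_2+2s_3)\beta^3$. *)

(* Defs.v *)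
From Stdlib Require Import Reals.
Open Scope R_scope.

Fixpoint rsum (n : nat) (f : nat -> R) : R :=
  match n with O => 0 | S k => rsum k f + f k end.

(* groups are indexed 0..Q-1 *)
Definition s_k (Q : nat) (pi : nat -> R) (k : nat) : R :=
  rsum Q (fun q => pi q ^ k).

Definition aff (alpha beta : R) (q l : nat) : R :=
  if Nat.eqb q l then alpha else beta.

(* m1 = E(X12), m2 = E(X12 X13), m3 = E(X12 X13 X23): expectations obtained
   by conditioning on the i.i.d. latent groups Z1, Z2, Z3 and using the
   conditional independence of the edges. *)
Definition m1 (Q : nat) (pi : nat -> R) (alpha beta : R) : R :=
  rsum Q (fun q => rsum Q (fun l => pi q * pi l * aff alpha beta q l)).

Definition m2 (Q : nat) (pi : nat -> R) (alpha beta : R) : R :=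
  rsum Q (fun q => rsum Q (fun l => rsum Q (fun r =>
    pi q * pi l * pi r * (aff alpha beta q l * aff alpha beta q r)))).

Definition m3 (Q : nat) (pi : nat -> R) (alpha beta : R) : R :=
  rsum Q (fun q => rsum Q (fun l => rsum Q (fun r =>
    pi q * pi l * pi r *
    (aff alpha beta q l * aff alpha beta q r * aff alpha beta l r)))).

Definition uniform (Q : nat) (pi : nat -> R) : Prop :=
  forall q, (q < Q)%nat -> pi q = 1 / INR Q.

Definition cbrt (x : R) : R :=
  if Rlt_dec 0 x then Rpower x (1/3)
  else if Rlt_dec x 0 then - Rpower (- x) (1/3)
  else 0.

(* Main.v *)
Require Import Defs.
From Stdlib Require Import Reals Lra Lia Psatz.
Open Scope R_scope.

Lemma rsum_ext n f g : (forall i, (i < n)%nat -> f i = g i) -> rsum n f = rsum n g.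
Proof. induction n; intros H; simpl; auto. rewrite IHn by (intros; apply H; lia). rewrite H by lia. auto. Qed.

Lemma rsum_mulr n c f : rsum n (fun i => c * f i) = c * rsum n f.
Proof. induction n; simpl; [ring|]. rewrite IHn; ring. Qed.

Lemma rsum_const n c : rsum n (fun _ => c) = INR n * c.
Proof. induction n; cbn [rsum]; [simpl; ring|]. rewrite IHn, S_INR; ring. Qed.

Lemma rsum_poly n (p : nat -> R) c1 c2 c3 c4 :
  rsum n (fun j => c1 * p j + c2 * p j ^ 2 + c3 * p j ^ 3 + c4 * p j ^ 4) =
  c1 * rsum n p + c2 * rsum n (fun j => p j ^ 2) + c3 * rsum n (fun j => p j ^ 3)
  + c4 * rsum n (fun j => p j ^ 4).
Proof. induction n; cbn [rsum]; [ring|]. rewrite IHn; ring. Qed.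

Lemma rsum_aff_ge n q g a b : (n <= q)%nat ->
  rsum n (fun r => g r * aff a b q r) = b * rsum n g.
Proof. induction n; intros H; simpl; [ring|]. rewrite IHn by lia.
  unfold aff. replace (Nat.eqb q n) with false by (symmetry; apply Nat.eqb_neq; lia). ring. Qed.

Lemma rsum_aff n q g a b : (q < n)%nat ->
  rsum n (fun r => g r * aff a b q r) = b * rsum n g + (a - b) * g q.
Proof. induction n; intros H; [lia|]. simpl.
  destruct (Nat.eq_dec q n) as [->|Hn].
  - rewrite rsum_aff_ge by lia. unfold aff. rewrite Nat.eqb_refl. ring.
  - rewrite IHn by lia. unfold aff. replace (Nat.eqb q n) with false by (symmetry; apply Nat.eqb_neq; lia). ring. Qed.

Lemma rsum_nonneg n f : (forall i, (i < n)%nat -> 0 <= f i) -> 0 <= rsum n f.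
Proof. induction n; intros H; simpl; [lra|]. pose proof (H n ltac:(lia)). pose proof (IHn ltac:(intros; apply H; lia)). lra. Qed.

Lemma rsum_le n f g : (forall i, (i < n)%nat -> f i <= g i) -> rsum n f <= rsum n g.
Proof. induction n; intros H; simpl; [lra|]. pose proof (H n ltac:(lia)). pose proof (IHn ltac:(intros; apply H; lia)). lra. Qed.

Lemma rsum_lt n f g : (1 <= n)%nat -> (forall i, (i < n)%nat -> f i < g i) -> rsum n f < rsum n g.
Proof. induction n; intros Hn H; [lia|]. simpl. pose proof (H n ltac:(lia)).
  destruct n. simpl; lra.
  pose proof (IHn ltac:(lia) ltac:(intros; apply H; lia)). lra. Qed.

Lemma rsum_ge_term n f i : (forall j, (j < n)%nat -> 0 <= f j) -> (i < n)%nat -> f i <= rsum n f.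
Proof. induction n; intros H Hi; [lia|]. simpl. destruct (Nat.eq_dec i n) as [->|].
  - pose proof (rsum_nonneg n f ltac:(intros; apply H; lia)). lra.
  - pose proof (IHn ltac:(intros; apply H; lia) ltac:(lia)). pose proof (H n ltac:(lia)). lra. Qed.

Lemma rsum_zero n f : (forall i, (i < n)%nat -> 0 <= f i) -> rsum n f = 0 ->
  forall i, (i < n)%nat -> f i = 0.
Proof. intros H Hs i Hi. pose proof (rsum_ge_term n f i H Hi). pose proof (H i Hi). lra. Qed.

Lemma cbrt_cube x : cbrt (x ^ 3) = x.
Proof. unfold cbrt. destruct (Rlt_dec 0 (x^3)).
  - assert (0 < x). { destruct (Rlt_le_dec 0 x); auto. exfalso. assert (x^3 <= 0). { replace (x^3) with (- ((-x)*(-x)*(-x))) by ring. assert (0 <= -x) by lra. assert (0 <= (-x)*(-x)*(-x)) by (apply Rmult_le_pos; [apply Rmult_le_pos|]; lra). lra. } lra. }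
    rewrite <- (Rpower_pow 3 x) by auto. rewrite Rpower_mult. replace (INR 3 * (1/3)) with 1 by (simpl; field). apply Rpower_1; auto.
  - destruct (Rlt_dec (x^3) 0).
    + assert (x < 0). { destruct (Rlt_le_dec x 0); auto. exfalso. assert (0 <= x^3) by (apply pow_le; lra). lra. }
      replace (- x^3) with ((-x)^3) by ring. rewrite <- (Rpower_pow 3 (-x)) by lra. rewrite Rpower_mult. replace (INR 3 * (1/3)) with 1 by (simpl; field). rewrite Rpower_1; lra.
    + assert (x^3 = 0) by lra. destruct (Req_dec x 0); auto. exfalso. apply (pow_nonzero x 3) in H0. auto. Qed.

Lemma rsum_add n f g : rsum n (fun i => f i + g i) = rsum n f + rsum n g.
Proof. induction n; simpl; [ring|]. rewrite IHn; ring. Qed.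

Lemma A1 Q pi a b q : rsum Q pi = 1 -> (q < Q)%nat ->
  rsum Q (fun l => pi l * aff a b q l) = b + (a - b) * pi q.
Proof. intros H Hq. rewrite rsum_aff, H by auto. ring. Qed.

Lemma m1_eq Q pi a b : rsum Q pi = 1 ->
  m1 Q pi a b = b + (a - b) * s_k Q pi 2.
Proof. intros H. unfold m1.
  rewrite (rsum_ext Q _ (fun q => (b) * pi q + ((a-b)) * pi q ^ 2 + 0 * pi q ^3 + 0 * pi q ^ 4)).
  - rewrite rsum_poly, H. unfold s_k. ring.
  - intros q Hq. rewrite (rsum_ext Q _ (fun l => pi q * (pi l * aff a b q l))) by (intros; ring).
    rewrite rsum_mulr, A1 by auto. ring. Qed.

Lemma m2_eq Q pi a b : rsum Q pi = 1 ->
  m2 Q pi a b = b^2 + 2 * b * (a - b) * s_k Q pi 2 + (a-b)^2 * s_k Q pi 3.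
Proof. intros H. unfold m2.
  rewrite (rsum_ext Q _ (fun q => (b^2) * pi q + (2*b*(a-b)) * pi q ^ 2 + ((a-b)^2) * pi q ^3 + 0 * pi q ^ 4)).
  - rewrite rsum_poly, H. unfold s_k. ring.
  - intros q Hq.
    rewrite (rsum_ext Q _ (fun l => (pi q * (b + (a-b) * pi q)) * (pi l * aff a b q l))).
    + rewrite rsum_mulr, A1 by auto. ring.
    + intros l Hl. rewrite (rsum_ext Q _ (fun r => (pi q * pi l * aff a b q l) * (pi r * aff a b q r))) by (intros; ring).
      rewrite rsum_mulr, A1 by auto. ring. Qed.

Lemma aff_sq a b q l : aff a b q l * aff a b q l = aff (a*a) (b*b) q l.
Proof. unfold aff; destruct (Nat.eqb q l); auto. Qed.

Lemma m3_eq Q pi a b : rsum Q pi = 1 ->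
  m3 Q pi a b = b^3 + 3 * b^2 * (a - b) * s_k Q pi 2 + 3 * b * (a-b)^2 * s_k Q pi 3
     + (a-b)^3 * s_k Q pi 3.
Proof. intros H. unfold m3.
  rewrite (rsum_ext Q _ (fun q => (b^3 + (a-b)*b^2*s_k Q pi 2) * pi q + (2*b^2*(a-b)) * pi q ^ 2 + (b*(a-b)^2 + (a-b)*(a*a-b*b)) * pi q ^3 + 0 * pi q ^ 4)).
  - rewrite rsum_poly, H. unfold s_k. ring.
  - intros q Hq.
    rewrite (rsum_ext Q _ (fun l => (pi q * b * (b + (a-b)*pi q)) * (pi l * aff a b q l)
          + (pi q * (a-b)) * (pi l ^ 2 * aff (a*a) (b*b) q l))).
    + rewrite (rsum_add Q (fun l => (pi q * b * (b + (a-b)*pi q)) * (pi l * aff a b q l))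
          (fun l => (pi q * (a-b)) * (pi l ^ 2 * aff (a*a) (b*b) q l))).
      rewrite !rsum_mulr, A1, rsum_aff by auto. unfold s_k. ring.
    + intros l Hl. rewrite (rsum_ext Q _ (fun r => (pi q * pi l * aff a b q l) * ((pi r * aff a b q r) * aff a b l r))) by (intros; ring).
      rewrite rsum_mulr, rsum_aff, A1 by auto. rewrite <- aff_sq. ring.
Qed.

Lemma Dsum Q pi : rsum Q pi = 1 ->
  rsum Q (fun i => rsum Q (fun j => pi i * pi j * (pi i - pi j)^2)) = 2 * (s_k Q pi 3 - s_k Q pi 2 ^ 2).
Proof. intros H.
  rewrite (rsum_ext Q _ (fun i => s_k Q pi 3 * pi i + (-2 * s_k Q pi 2) * pi i ^ 2 + 1 * pi i ^ 3 + 0 * pi i ^ 4)).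
  - rewrite rsum_poly, H. unfold s_k. ring.
  - intros i Hi. rewrite (rsum_ext Q _ (fun j => pi i ^ 3 * pi j + (-2 * pi i ^2) * pi j ^ 2 + pi i * pi j ^ 3 + 0 * pi j ^ 4)) by (intros; ring).
    rewrite rsum_poly, H. unfold s_k. ring. Qed.

Lemma Esum Q pi :
  rsum Q (fun i => rsum Q (fun j => (pi i * pi j ^ 2 - pi j * pi i ^ 2)^2)) = 2 * (s_k Q pi 2 * s_k Q pi 4 - s_k Q pi 3 ^ 2).
Proof.
  rewrite (rsum_ext Q _ (fun i => 0 * pi i + s_k Q pi 4 * pi i ^ 2 + (-2 * s_k Q pi 3) * pi i ^ 3 + s_k Q pi 2 * pi i ^ 4)).
  - rewrite rsum_poly. unfold s_k. ring.
  - intros i Hi. rewrite (rsum_ext Q _ (fun j => 0 * pi j + pi i ^ 4 * pi j ^ 2 + (-2 * pi i ^3) * pi j ^ 3 + pi i ^ 2 * pi j ^ 4)) by (intros; ring).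
    rewrite rsum_poly. unfold s_k. ring. Qed.

Lemma s4_le Q pi : s_k Q pi 4 <= s_k Q pi 2 ^ 2.
Proof. unfold s_k. replace (rsum Q (fun q => pi q ^ 2) ^ 2) with
  (rsum Q (fun i => rsum Q (fun j => pi i ^ 2 * pi j ^ 2))).
  - apply rsum_le. intros i Hi. replace (pi i ^ 4) with ((fun j => pi i ^ 2 * pi j ^ 2) i) by ring.
    apply (rsum_ge_term Q (fun j => pi i ^ 2 * pi j ^ 2)); auto. intros. apply Rmult_le_pos; apply pow2_ge_0.
  - rewrite (rsum_ext Q _ (fun i => rsum Q (fun q => pi q ^ 2) * pi i ^ 2)).
    + rewrite rsum_mulr. ring.
    + intros. rewrite rsum_mulr. ring. Qed.

Lemma s3sq_le Q pi : 0 <= s_k Q pi 2 -> s_k Q pi 3 ^ 2 <= s_k Q pi 2 ^ 3.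
Proof. intros H2.
  assert (0 <= 2 * (s_k Q pi 2 * s_k Q pi 4 - s_k Q pi 3 ^ 2)).
  { rewrite <- Esum. apply rsum_nonneg; intros; apply rsum_nonneg; intros; apply pow2_ge_0. }
  pose proof (s4_le Q pi).
  assert (s_k Q pi 2 * s_k Q pi 4 <= s_k Q pi 2 * s_k Q pi 2 ^ 2) by (apply Rmult_le_compat_l; auto).
  simpl in *. lra. Qed.

Lemma uniform_of Q pi : (1 <= Q)%nat -> (forall q, (q < Q)%nat -> 0 < pi q) -> rsum Q pi = 1 ->
  s_k Q pi 3 = s_k Q pi 2 ^ 2 -> uniform Q pi.
Proof. intros HQ Hp H Hs.
  assert (HD: rsum Q (fun i => rsum Q (fun j => pi i * pi j * (pi i - pi j)^2)) = 0) by (rewrite Dsum; auto; lra).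
  assert (Heq: forall i j, (i < Q)%nat -> (j < Q)%nat -> pi i = pi j).
  { intros i j Hi Hj.
    assert (Hnn: forall i, (i < Q)%nat -> forall j, (j < Q)%nat -> 0 <= pi i * pi j * (pi i - pi j)^2).
    { intros i' Hi' j' Hj'. pose proof (Hp i' Hi'); pose proof (Hp j' Hj').
      apply Rmult_le_pos; [apply Rmult_le_pos; lra|apply pow2_ge_0]. }
    pose proof (rsum_zero Q _ (fun i Hi => rsum_nonneg Q _ (Hnn i Hi)) HD i Hi) as Hi0.
    pose proof (rsum_zero Q _ (Hnn i Hi) Hi0 j Hj) as Hij. cbv beta in Hij.
    pose proof (Hp i Hi); pose proof (Hp j Hj).
    assert (pi i * pi j <> 0) by (apply Rmult_integral_contrapositive; split; lra).
    assert ((pi i - pi j)^2 = 0). { apply (Rmult_eq_reg_l (pi i * pi j)); auto. rewrite Hij; ring. }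
    nra. }
  assert (rsum Q pi = INR Q * pi 0%nat).
  { rewrite <- rsum_const. apply rsum_ext. intros; apply Heq; lia. }
  intros q Hq. rewrite (Heq q 0%nat) by lia.
  assert (INR Q <> 0) by (apply not_0_INR; lia). field_simplify_eq; auto. lra. Qed.

Lemma f_pos s2 s3 : 0 < s2 < 1 -> 0 <= s3 -> s3 ^ 2 <= s2 ^ 3 -> 0 < 2 * s2 ^ 3 - 3 * s3 * s2 + s3.
Proof. intros [h0 h1] h3 h4.
  destruct (Rle_lt_dec s2 (1/3)).
  - assert (0 <= s3 * (1 - 3 * s2)) by (apply Rmult_le_pos; lra).
    assert (0 < s2 ^ 3) by (apply pow_lt; lra). nra.
  - destruct (Rlt_le_dec 0 (2 * s2 ^ 3 - 3 * s3 * s2 + s3)); auto. exfalso.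
    set (x := 3 * s2 - 1) in *.
    assert (hx : 0 < x) by (unfold x; lra).
    assert (hA : 2 * s2 ^ 3 <= s3 * x) by (unfold x; lra).
    assert (0 < 2 * s2 ^ 3) by (assert (0 < s2 ^ 3) by (apply pow_lt; lra); lra).
    assert ((2 * s2 ^ 3) ^ 2 <= (s3 * x) ^ 2) by (apply pow_incr; lra).
    assert ((s3 * x) ^ 2 <= s2 ^ 3 * x ^ 2) by (rewrite Rpow_mult_distr; apply Rmult_le_compat_r; [apply pow2_ge_0| auto]).
    assert (4 * s2 ^ 6 <= s2 ^ 3 * x ^ 2) by (replace (4 * s2 ^ 6) with ((2 * s2 ^ 3) ^ 2) by ring; lra).
    assert (0 < s2 ^ 3) by (apply pow_lt; lra).
    assert (4 * s2 ^ 3 <= x ^ 2).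
    { apply (Rmult_le_reg_l (s2 ^ 3)); auto. replace (s2 ^ 3 * (4 * s2 ^ 3)) with (4 * s2 ^ 6) by ring. lra. }
    unfold x in *.
    assert (0 < (s2 - 1) ^ 2 * (4 * s2 - 1)).
    { apply Rmult_lt_0_compat; [|lra]. simpl. nra. }
    nra.
Qed.

Lemma unif_s Q pi k : (1 <= Q)%nat -> uniform Q pi -> s_k Q pi k = INR Q * (1 / INR Q) ^ k.
Proof. intros HQ U. unfold s_k. rewrite <- rsum_const. apply rsum_ext. intros i Hi. rewrite U; auto. Qed.

Theorem theorem4 (Q : nat) (pi : nat -> R) (alpha beta : R) :
  (2 <= Q)%nat ->
  (forall q, (q < Q)%nat -> 0 < pi q < 1) ->
  rsum Q pi = 1 ->
  0 <= alpha <= 1 -> 0 <= beta <= 1 ->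
  alpha <> beta ->
  let s2 := s_k Q pi 2 in
  let s3 := s_k Q pi 3 in
  let M1 := m1 Q pi alpha beta in
  let M2 := m2 Q pi alpha beta in
  let M3 := m3 Q pi alpha beta in
  (M2 <> M1 ^ 2 ->
     ~ uniform Q pi /\
     M1 ^ 2 - M2 <> 0 /\
     2 * s2 ^ 3 - 3 * s3 * s2 + s3 <> 0 /\
     beta = ((s3 - s2 * s3) * M1 ^ 3 + (s2 ^ 3 - s3) * M2 * M1
             + (s3 * s2 - s2 ^ 3) * M3)
            / ((M1 ^ 2 - M2) * (2 * s2 ^ 3 - 3 * s3 * s2 + s3)) /\
     alpha = (M1 + (s2 - 1) * beta) / s2) /\
  (M2 = M1 ^ 2 ->
     uniform Q pi /\
     beta = M1 + cbrt ((M1 ^ 3 - M3) / (INR Q - 1)) /\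
     alpha = INR Q * M1 + (1 - INR Q) * beta).
Proof.
  intros HQ Hp H1 Ha Hb Hab. cbv zeta.
  rewrite (m1_eq _ _ _ _ H1), (m2_eq _ _ _ _ H1), (m3_eq _ _ _ _ H1).
  assert (Hs2p : 0 < s_k Q pi 2).
  { replace 0 with (rsum Q (fun _ => 0)) by (rewrite rsum_const; ring). unfold s_k.
    apply rsum_lt; [lia|]. intros i Hi. pose proof (Hp i Hi). apply pow_lt; lra. }
  assert (Hs21 : s_k Q pi 2 < 1).
  { rewrite <- H1. unfold s_k. apply rsum_lt; [lia|]. intros i Hi. pose proof (Hp i Hi). simpl. nra. }
  assert (Hs3 : 0 <= s_k Q pi 3).
  { unfold s_k. apply rsum_nonneg. intros i Hi. pose proof (Hp i Hi). apply pow_le; lra. }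
  pose proof (s3sq_le Q pi ltac:(lra)) as Hcs.
  pose proof (f_pos _ _ (conj Hs2p Hs21) Hs3 Hcs) as Hf.
  assert (HQR : 2 <= INR Q) by (replace 2 with (INR 2) by (simpl; ring); apply le_INR; auto).
  assert (Hd : alpha - beta <> 0) by lra.
  set (S2 := s_k Q pi 2) in *. set (S3 := s_k Q pi 3) in *. set (d := alpha - beta) in *.
  assert (Hu : uniform Q pi -> S2 = 1 / INR Q /\ S3 = 1 / INR Q ^ 2).
  { intros U. unfold S2, S3. rewrite !(unif_s Q pi) by (auto; lia). split; field; lra. }
  split.
  - intros Hne. assert (Hne2 : S3 - S2 ^ 2 <> 0).
    { intro E. apply Hne. replace S3 with (S2 ^ 2) by lra. ring. }
    split; [|split; [|split; [|split]]].
    + intro U. destruct (Hu U) as [E2 E3]. apply Hne2. rewrite E2, E3. field. lra.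
    + intro E. apply Hne. lra.
    + lra.
    + field. split; [lra|]. intro E. apply Hne. lra.

    + unfold d. field. lra.
  - intros Heq.
    assert (E : S3 = S2 ^ 2).
    { assert (d ^ 2 * (S3 - S2 ^ 2) = 0) by (rewrite <- (Rminus_diag_eq _ _ Heq); ring).
      apply Rmult_integral in H. destruct H. exfalso; apply Hd; nra. lra. }
    assert (U : uniform Q pi) by (apply uniform_of; auto; [lia|intros q Hq; apply Hp; auto]).
    destruct (Hu U) as [E2 E3].
    split; [auto|]. rewrite E2, E3.
    replace (((beta + d * (1 / INR Q)) ^ 3 - (beta ^ 3 + 3 * beta ^ 2 * d * (1 / INR Q) + 3 * beta * d ^ 2 * (1 / INR Q ^ 2) + d ^ 3 * (1 / INR Q ^ 2))) / (INR Q - 1))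
      with ((- d / INR Q) ^ 3) by (field; lra).
    rewrite cbrt_cube. unfold d. split; field; lra.
Qed.
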